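(* Let $p\neq2$ and let $L_{\mathbb{Z}_p}$ be a lattice of rank $m$ with integral non-degenerate quadratic form such that $L^*_{\mathbb{Z}_p}/L_{\mathbb{Z}_p}$ is cyclic, of order $p^\nu$. Then $$\mathrm{SO}(L_{\mathbb{Z}_p})/\mathrm{SO}'(L_{\mathbb{Z}_p})\cong\begin{cases}1&\text{if }\nu=0\text{ or }m=1,\\ \mathbb{Z}/2\mathbb{Z}&\text{otherwise.}\end{cases}$$
   Context: Bilinear form $\langle v,w\rangle=Q(v+w)-Q(v)-Q(w)$; integral means $Q(L_{\mathbb{Z}_p})\subseteq\mathbb{Z}_p$; $L^*_{\mathbb{Z}_p}=\{v\in L_{\mathbb{Q}_p}:\langle v,L_{\mathbb{Z}_p}\rangle\subseteq\mathbb{Z}_p\}$; $\mathrm{SO}(L_{\mathbb{Z}_p})$ is the stabilizer of $L_{\mathbb{Z}_p}$ in $\mathrm{SO}(L_{\mathbb{Q}_p})$, and the discriminant kernel $\mathrm{SO}'(L_{\mathbb{Z}_p})$ is the kernel of $\mathrm{SO}(L_{\mathbb{Z}_p})\to\mathrm{Aut}(L^*_{\mathbb{Z}_p}/L_{\mathbb{Z}_p})$. *)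

(* Defs.v *)
From HB Require Import structures.
From Stdlib Require Import ClassicalEpsilon FunctionalExtensionality ProofIrrelevance.
From mathcomp Require Import all_boot all_order all_algebra.

Set Implicit Arguments.
Unset Strict Implicit.
Unset Printing Implicit Defensive.

Import Order.TTheory GRing.Theory Num.Theory.
Local Open Scope ring_scope.

Section Padic.
Variable p : nat.

(* the base of the inverse system; it equals p whenever p is prime *)
Definition pbase : int := (maxn p 2)%:Z.
Definition pmod (n : nat) : int := pbase ^+ n.

(* compatible sequences (x_n)_n with x_n in Z/p^n Z (represented by the
   reduced representative in [0, p^n)) and x_{n+k} = x_n mod p^n *)
Definition padic_compat (f : nat -> int) :=
  forall n k, f n = modz (f (n + k)%N) (pmod n).

Record padic_int := PadicInt { pseq :> nat -> int; pseqP : padic_compat pseq }.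

Lemma padic_eq (x y : padic_int) : pseq x = pseq y -> x = y.
Proof.
case: x => f fP; case: y => g gP /= efg; subst g.
by rewrite (proof_irrelevance _ fP gP).
Qed.

Lemma pmodD n k : pmod (n + k) = pmod k * pmod n.
Proof. by rewrite /pmod exprD mulrC. Qed.

Lemma modz_dvdl (m d e : int) : modz (modz m (e * d)) d = modz m d.
Proof. by rewrite {2}(divz_eq m (e * d)) mulrA modzMDl. Qed.

Lemma pseq_mod (x : padic_int) n : modz (x n) (pmod n) = x n.
Proof. by rewrite {2}(pseqP x n 0) addn0. Qed.

Lemma pbase_gt1 : 1 < pbase.
Proof. by rewrite /pbase ltz_nat leq_max orbT. Qed.

Definition padic_eqb (x y : padic_int) : bool :=
  if excluded_middle_informative (x = y) then true else false.

Lemma padic_eqP : Equality.axiom padic_eqb.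
Proof.
move=> x y; rewrite /padic_eqb.
by case: excluded_middle_informative => h; constructor.
Qed.

HB.instance Definition _ := hasDecEq.Build padic_int padic_eqP.

Definition padic_find (P : pred padic_int) (n : nat) : option padic_int :=
  match excluded_middle_informative (exists x, P x) with
  | left H => Some (proj1_sig (constructive_indefinite_description _ H))
  | right _ => None
  end.

Lemma padic_find_correct P n x : padic_find P n = Some x -> P x.
Proof.
rewrite /padic_find; case: excluded_middle_informative => // H [<-].
exact: proj2_sig (constructive_indefinite_description _ H).
Qed.

Lemma padic_find_complete (P : pred padic_int) :
  (exists x, P x) -> exists n, padic_find P n.
Proof.
move=> H; exists 0%N; rewrite /padic_find.
by case: excluded_middle_informative.
Qed.

Lemma padic_find_ext (P Q : pred padic_int) :
  P =1 Q -> padic_find P =1 padic_find Q.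
Proof.
by move=> PQ; have -> : P = Q by apply: functional_extensionality.
Qed.

HB.instance Definition _ := hasChoice.Build padic_int
  padic_find_correct padic_find_complete padic_find_ext.

Lemma padic_zero_compat : padic_compat (fun _ => 0).
Proof. by move=> n k; rewrite mod0z. Qed.
Definition padic_zero := PadicInt padic_zero_compat.

Lemma padic_one_compat : padic_compat (fun n => modz 1 (pmod n)).
Proof. by move=> n k; rewrite pmodD modz_dvdl. Qed.
Definition padic_one := PadicInt padic_one_compat.

Lemma padic_add_compat (x y : padic_int) :
  padic_compat (fun n => modz (x n + y n) (pmod n)).
Proof.
move=> n k; rewrite pmodD modz_dvdl (pseqP x n k) (pseqP y n k).
by rewrite modzDm.
Qed.
Definition padic_add x y := PadicInt (padic_add_compat x y).

Lemma padic_opp_compat (x : padic_int) :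
  padic_compat (fun n => modz (- x n) (pmod n)).
Proof.
by move=> n k; rewrite pmodD modz_dvdl (pseqP x n k) modzNm.
Qed.
Definition padic_opp x := PadicInt (padic_opp_compat x).

Lemma padic_mul_compat (x y : padic_int) :
  padic_compat (fun n => modz (x n * y n) (pmod n)).
Proof.
move=> n k; rewrite pmodD modz_dvdl (pseqP x n k) (pseqP y n k).
by rewrite modzMm.
Qed.
Definition padic_mul x y := PadicInt (padic_mul_compat x y).

Lemma padic_addA : associative padic_add.
Proof.
move=> x y z; apply: padic_eq => /=; apply: functional_extensionality => n.
by rewrite modzDml modzDmr addrA.
Qed.

Lemma padic_addC : commutative padic_add.
Proof.
move=> x y; apply: padic_eq => /=; apply: functional_extensionality => n.
by rewrite addrC.
Qed.

Lemma padic_add0 : left_id padic_zero padic_add.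
Proof.
move=> x; apply: padic_eq => /=; apply: functional_extensionality => n.
by rewrite add0r pseq_mod.
Qed.

Lemma padic_addN : left_inverse padic_zero padic_opp padic_add.
Proof.
move=> x; apply: padic_eq => /=; apply: functional_extensionality => n.
by rewrite modzDml addNr mod0z.
Qed.

HB.instance Definition _ := GRing.isZmodule.Build padic_int
  padic_addA padic_addC padic_add0 padic_addN.

Lemma padic_mulA : associative padic_mul.
Proof.
move=> x y z; apply: padic_eq => /=; apply: functional_extensionality => n.
by rewrite modzMml modzMmr mulrA.
Qed.

Lemma padic_mulC : commutative padic_mul.
Proof.
move=> x y; apply: padic_eq => /=; apply: functional_extensionality => n.
by rewrite mulrC.
Qed.

Lemma padic_mul1 : left_id padic_one padic_mul.
Proof.
move=> x; apply: padic_eq => /=; apply: functional_extensionality => n.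
by rewrite modzMml mul1r pseq_mod.
Qed.

Lemma padic_mulDl : left_distributive padic_mul padic_add.
Proof.
move=> x y z; apply: padic_eq => /=; apply: functional_extensionality => n.
by rewrite modzMml modzDm mulrDl.
Qed.

Lemma padic_one_neq0 : padic_one != padic_zero.
Proof.
apply/eqP => /(congr1 (fun x : padic_int => pseq x 1%N)) /=.
rewrite /pmod expr1 modz_small; first by [].
by rewrite ler01 pbase_gt1.
Qed.

HB.instance Definition _ := GRing.Zmodule_isComNzRing.Build padic_int
  padic_mulA padic_mulC padic_mul1 padic_mulDl padic_one_neq0.

End Padic.

Notation "''Z_p[' p ]" := (padic_int p) (at level 8, format "''Z_p[' p ]").

(* A lattice of rank m is L = Z_p^m (row vectors 'rV_m); an integral   *)
(* quadratic form on it is v |-> v A v^T for a matrix A over Z_p       *)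
(* (every integral quadratic form on Z_p^m arises this way).           *)

Section Lattice.
Variables (R : comNzRingType) (m : nat) (A : 'M[R]_m).

Definition qform (v : 'rV[R]_m) : R := (v *m A *m v^T) ord0 ord0.

Definition bform (v w : 'rV[R]_m) : R := qform (v + w) - qform v - qform w.

Definition gram : 'M[R]_m := \matrix_(i, j) bform (delta_mx 0 i) (delta_mx 0 j).

(* non-degenerate: the Gram matrix has non-zero determinant
   (equivalently, the form is non-degenerate on L (x) Q_p) *)
Definition qf_nondegenerate : Prop := \det gram != 0.

(* Elements of the dual lattice L^* are identified with Z_p-linear
   functionals phi : L -> Z_p (given by their values on the basis,
   as a row vector); phi(w) = sum_i phi_i w_i.  L sits inside L^* via
   v |-> <v, .>. *)
Definition feval (phi w : 'rV[R]_m) : R := \sum_i phi ord0 i * w ord0 i.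

Definition in_lattice (phi : 'rV[R]_m) : Prop :=
  exists v : 'rV[R]_m, forall w, feval phi w = bform v w.

Definition disc_cyclic_of_order (N : nat) : Prop :=
  exists phi0 : 'rV[R]_m,
    [/\ forall phi, exists k : nat, in_lattice (phi - phi0 *+ k),
        in_lattice (phi0 *+ N)
      & forall k : nat, (0 < k < N)%N -> ~ in_lattice (phi0 *+ k)].

(* SO(L): Z_p-linear maps v |-> v g of L preserving Q, of determinant 1
   (these are exactly the elements of SO(L_Q_p) stabilizing L) *)
Definition SO_lat (g : 'M[R]_m) : Prop :=
  (forall v, qform (v *m g) = qform v) /\ \det g = 1.

Definition acts_trivially_on_disc (g : 'M[R]_m) : Prop :=
  forall phi : 'rV[R]_m,
    in_lattice (\row_j (feval phi (delta_mx 0 j) - feval phi (delta_mx 0 j *m g))).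

Definition SO'_lat (g : 'M[R]_m) : Prop := SO_lat g /\ acts_trivially_on_disc g.

End Lattice.

(* For a normal subgroup H of G (given as predicates on matrices),
   G/H is trivial, resp. G/H is isomorphic to Z/2Z (i.e. H has index 2). *)
Definition quotient_trivial (R : comNzRingType) (m : nat)
  (G H : 'M[R]_m -> Prop) : Prop := forall g, G g -> H g.

Definition quotient_is_Z2 (R : comNzRingType) (m : nat)
  (G H : 'M[R]_m -> Prop) : Prop :=
  exists g0, [/\ G g0, ~ H g0 &
    forall g, G g -> H g \/ exists k, H k /\ g = g0 *m k].

(* Main.v *)
Require Import Defs.
From HB Require Import structures.
From Stdlib Require Import FunctionalExtensionality.
From mathcomp Require Import all_boot all_order all_algebra.
From mathcomp Require Import ring zify.

Set Implicit Arguments.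
Unset Strict Implicit.
Unset Printing Implicit Defensive.
Import Order.TTheory GRing.Theory Num.Theory.
Local Open Scope ring_scope.


Section P.
Variable p : nat.
Hypothesis pr : prime p.
Local Notation R := ('Z_p[p]).
Lemma addE (x y : R) k : (x + y) k = ((x k + y k) %% pmod p k)%Z. Proof. by []. Qed.
Lemma mulE (x y : R) k : (x * y) k = ((x k * y k) %% pmod p k)%Z. Proof. by []. Qed.
Lemma oppE (x : R) k : (- x) k = ((- x k) %% pmod p k)%Z. Proof. by []. Qed.
Lemma zeroE k : (0 : R) k = 0. Proof. by []. Qed.
Lemma oneE k : (1 : R) k = (1 %% pmod p k)%Z. Proof. by []. Qed.

Lemma pmodE k : pmod p k = (p%:Z) ^+ k.
Proof. by rewrite /pmod /pbase (maxn_idPl (prime_gt1 pr)). Qed.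

Lemma pmod_gt0 k : 0 < pmod p k.
Proof. by rewrite pmodE exprn_gt0 // ltz_nat prime_gt0. Qed.

Lemma pmod_neq0 k : pmod p k != 0.
Proof. by rewrite gt_eqF // pmod_gt0. Qed.

Lemma natE n k : (n%:R : R) k = (n%:Z %% pmod p k)%Z.
Proof.
elim: n => [|n IH]; first by rewrite mod0z.
by rewrite mulrS addE oneE IH modzDm intS.
Qed.

Lemma intE z k : (z%:~R : R) k = (z %% pmod p k)%Z.
Proof.
case: z => n; first by rewrite natE.
by rewrite NegzE mulrNz oppE natE modzNm.
Qed.

Lemma ptf (x : R) : p%:R * x = 0 -> x = 0.
Proof.
move=> E; apply: padic_eq; apply: functional_extensionality => n.
have H : (p%:R * x : R) n.+1 = (0 : R) n.+1 by rewrite E.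
rewrite mulE natE zeroE modzMml in H.
move/dvdz_mod0P: H; rewrite pmodE exprS dvdz_mul2l; last by rewrite eqz_nat -lt0n prime_gt0.
move=> H; rewrite zeroE (pseqP x n 1) addn1; apply/dvdz_mod0P; by rewrite pmodE.
Qed.

Lemma ntf (x : R) k : (p ^ k)%:R * x = 0 -> x = 0.
Proof.
elim: k x => [|k IH] x; first by rewrite mul1r.
by rewrite expnS natrM -mulrA => /ptf /IH.
Qed.

Lemma p_dvd_lvl (x : R) n : x 1%N = 0 -> (p%:Z %| x n.+1)%Z.
Proof.
move=> h; apply/dvdz_mod0P.
have := pseqP x 1 n; rewrite h add1n pmodE expr1 => e; by rewrite -e.
Qed.

Lemma zp_pdiv (x : R) : x 1%N = 0 -> exists y : R, x = p%:R * y.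
Proof.
move=> h.
have pn0 : (p%:Z) != 0 by rewrite eqz_nat -lt0n prime_gt0.
have pp : (0 < p%:Z) by rewrite ltz_nat prime_gt0.
pose f := fun n => (x n.+1 %/ p%:Z)%Z.
have fP : padic_compat p f.
  move=> n k; rewrite /f.
  have e1 := pseqP x n.+1 k.
  have d1 := p_dvd_lvl n h; have d2 := p_dvd_lvl (n+k) h.
  move: e1; rewrite addSn -{1}(divzK d1) -{1}(divzK d2) pmodE exprS.
  rewrite [_ * p%:Z]mulrC [_ * p%:Z]mulrC -mulz_modr // => /(congr1 (fun z => (z %/ p%:Z)%Z)).
  by rewrite !mulKz // pmodE.
exists (PadicInt fP); apply: padic_eq; apply: functional_extensionality => n.
rewrite mulE natE /= /f modzMml mulrC divzK; last by case: n => [|n]; apply: p_dvd_lvl.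
by rewrite (pseqP x n 1) addn1.
Qed.
Lemma lvl_mod1 (x : R) n : (x n.+1 = x 1%N %[mod p])%Z.
Proof.
have := pseqP x 1 n; rewrite add1n pmodE expr1 => ->.
by rewrite modz_mod.
Qed.

Lemma lvl1_small (x : R) : (x 1%N %% p)%Z = x 1%N.
Proof. by have := pseq_mod x 1; rewrite pmodE expr1. Qed.

Lemma coprime_lvl (x : R) n : x 1%N != 0 -> coprimez (x n.+1) p.
Proof.
move=> h; rewrite coprimezE coprime_sym prime_coprime //.
apply/negP => hd.
have : (p%:Z %| x n.+1)%Z by rewrite dvdzE.
move/dvdz_mod0P; rewrite lvl_mod1 lvl1_small => e.
by rewrite e eqxx in h.
Qed.

Lemma modz_uniq (a b x d : int) :
  (a * x = 1 %[mod d])%Z -> (b * x = 1 %[mod d])%Z -> (a = b %[mod d])%Z.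
Proof.
move=> ha hb.
rewrite -[a]mulr1 -modzMmr -hb modzMmr mulrA [a * b]mulrC -mulrA.
by rewrite -modzMmr ha modzMmr mulr1.
Qed.

Lemma punit (x : R) : x 1%N != 0 -> exists y : R, x * y = 1.
Proof.
move=> h.
pose u := fun n => projT1 (Bezoutz (x n) (pmod p n)).
pose f := fun n => (u n %% pmod p n)%Z.
have spec : forall n, (f n * x n = 1 %[mod pmod p n])%Z.
  move=> n; rewrite /f modzMml /u.
  case: (Bezoutz (x n) (pmod p n)) => a [b /= hab].
  case: n hab => [|n] hab; first by rewrite /pmod expr0 !modz1.
  have cp : coprimez (x n.+1) (pmod p n.+1).
    by rewrite pmodE; apply: coprimezXr; apply: coprime_lvl.
  move: cp; rewrite /coprimez => /eqP cp.
  have g1 : gcdz (x n.+1) (pmod p n.+1) = 1 by apply: cp.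
  by rewrite -g1 -hab addrC modzMDl.
have fP : padic_compat p f.
  move=> n k.
  have H := spec (n + k)%N.
  have H2 : (f (n + k)%N * x n = 1 %[mod pmod p n])%Z.
    rewrite (pseqP x n k) modzMmr.
    move: H; rewrite pmodD => /(congr1 (fun z => (z %% pmod p n)%Z)).
    by rewrite !modz_dvdl.
  have := modz_uniq (spec n) H2.
  by rewrite /f modz_mod => ->.
exists (PadicInt fP); apply: padic_eq; apply: functional_extensionality => n.
by rewrite mulE oneE /= mulrC spec.
Qed.

End P.


Section Gen.
Variables (R : comNzRingType) (m : nat) (A : 'M[R]_m).
Definition Bm : 'M[R]_m := A + A^T.
Definition bpair (x y : 'rV[R]_m) : R := (x *m y^T) 0 0.
Definition Lat (phi : 'rV[R]_m) : Prop := exists v, phi = v *m Bm.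

Lemma BmT : Bm^T = Bm.
Proof. by rewrite /Bm linearD /= trmxK addrC. Qed.

Lemma pairC x y : bpair x y = bpair y x.
Proof.
rewrite /bpair -[in RHS](trmxK (y *m x^T)) trmx_mul trmxK.
by rewrite [in RHS]mxE.
Qed.

Lemma pairM x (M : 'M[R]_m) y : bpair (x *m M) y = bpair x (y *m M^T).
Proof. by rewrite /bpair trmx_mul trmxK mulmxA. Qed.

Lemma pairDl x1 x2 y : bpair (x1 + x2) y = bpair x1 y + bpair x2 y.
Proof. by rewrite /bpair mulmxDl mxE. Qed.
Lemma pairDr x y1 y2 : bpair x (y1 + y2) = bpair x y1 + bpair x y2.
Proof. by rewrite pairC pairDl !(pairC _ x). Qed.
Lemma pairNl x y : bpair (- x) y = - bpair x y.
Proof. by rewrite /bpair mulNmx mxE. Qed.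
Lemma pairNr x y : bpair x (- y) = - bpair x y.
Proof. by rewrite pairC pairNl pairC. Qed.
Lemma pairZl a x y : bpair (a *: x) y = a * bpair x y.
Proof. by rewrite /bpair -scalemxAl mxE. Qed.
Lemma pairZr a x y : bpair x (a *: y) = a * bpair x y.
Proof. by rewrite pairC pairZl pairC. Qed.
Lemma pairBl x1 x2 y : bpair (x1 - x2) y = bpair x1 y - bpair x2 y.
Proof. by rewrite pairDl pairNl. Qed.
Lemma pairBr x y1 y2 : bpair x (y1 - y2) = bpair x y1 - bpair x y2.
Proof. by rewrite pairDr pairNr. Qed.
Lemma pair0l y : bpair 0 y = 0.
Proof. by rewrite /bpair mul0mx mxE. Qed.
Lemma pair0r y : bpair y 0 = 0.
Proof. by rewrite pairC pair0l. Qed.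

Lemma pair_delta x j : bpair x (delta_mx 0 j) = x 0 j.
Proof. by rewrite /bpair trmx_delta -colE mxE. Qed.

Lemma pair_delta_l (M : 'M[R]_m) i j : bpair (delta_mx 0 i *m M) (delta_mx 0 j) = M i j.
Proof. by rewrite pair_delta -rowE mxE. Qed.

Lemma fevalE phi w : feval phi w = bpair phi w.
Proof. by rewrite /feval /bpair mxE; apply: eq_bigr => i _; rewrite mxE. Qed.

Lemma qformE v : qform A v = bpair (v *m A) v.
Proof. by []. Qed.

Lemma bformE v w : bform A v w = bpair (v *m Bm) w.
Proof.
rewrite /bform !qformE mulmxDl !pairDl !pairDr /Bm mulmxDr pairDl.
rewrite [bpair (w *m A) v]pairM [bpair w _]pairC.
by ring.
Qed.

Lemma pairB2 v : bpair (v *m Bm) v = qform A v + qform A v.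
Proof.
rewrite /Bm mulmxDr pairDl qformE.
by rewrite [bpair (v *m A^T) v]pairM trmxK [bpair v _]pairC.
Qed.

Lemma in_latticeE phi : in_lattice A phi <-> Lat phi.
Proof.
split.
  move=> [v hv]; exists v; apply/rowP => j.
  by have := hv (delta_mx 0 j); rewrite fevalE bformE !pair_delta.
move=> [v ->]; exists v => w; by rewrite fevalE bformE.
Qed.

Lemma actsE g : acts_trivially_on_disc A g <-> forall phi, Lat (phi - phi *m g^T).
Proof.
have e : forall phi, (\row_j (feval phi (delta_mx 0 j) - feval phi (delta_mx 0 j *m g)))
   = phi - phi *m g^T.
  move=> phi; apply/rowP => j; rewrite !mxE !fevalE pair_delta pairC pairM pairC.
  by rewrite pair_delta mxE.
split=> h phi; [rewrite -e; apply/in_latticeE; exact: h|rewrite e; apply/in_latticeE; exact: h].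
Qed.

Lemma SO_B g : (forall v, qform A (v *m g) = qform A v) -> g *m Bm *m g^T = Bm.
Proof.
move=> h; apply/matrixP => i j.
have := congr1 id (erefl (bform A (delta_mx 0 i *m g) (delta_mx 0 j *m g))).
rewrite {2}/bform -mulmxDl !h -/(bform A _ _) !bformE => e.
by rewrite -[LHS]pair_delta_l !mulmxA pairM trmxK e pair_delta_l.
Qed.

Lemma B_SO g : (forall a b : R, a + a = b + b -> a = b) ->
  g *m Bm *m g^T = Bm -> forall v, qform A (v *m g) = qform A v.
Proof.
move=> h2 hg v; apply: h2; rewrite -!pairB2.
have hh : v *m g *m Bm *m g^T = v *m Bm by rewrite -[in RHS]hg !mulmxA.
by rewrite pairC pairM hh pairC.
Qed.

End Gen.


Section Act.
Variables (R : comNzRingType) (m : nat) (A : 'M[R]_m).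
Local Notation Lat := (Lat A).
Local Notation B := (Bm A).

Lemma Lat0 : Lat 0. Proof. by exists 0; rewrite mul0mx. Qed.
Lemma LatD x y : Lat x -> Lat y -> Lat (x + y).
Proof. by move=> [a ->] [b ->]; exists (a + b); rewrite mulmxDl. Qed.
Lemma LatN x : Lat x -> Lat (- x).
Proof. by move=> [a ->]; exists (- a); rewrite mulNmx. Qed.
Lemma LatB x y : Lat x -> Lat y -> Lat (x - y).
Proof. by move=> hx hy; apply: LatD => //; apply: LatN. Qed.
Lemma LatZ a x : Lat x -> Lat (a *: x).
Proof. by move=> [b ->]; exists (a *: b); rewrite scalemxAl. Qed.
Lemma LatM v : Lat (v *m B). Proof. by exists v. Qed.

Lemma Lat_pres g g' : g' *m g = 1%:M -> g *m B *m g^T = B ->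
  forall x, Lat x -> Lat (x *m g^T).
Proof.
move=> h1 hg x [v ->]; exists (v *m g').
have e : B *m g^T = g' *m B.
  by rewrite -{2}hg !mulmxA h1 mul1mx.
by rewrite -mulmxA e mulmxA.
Qed.

Definition acts_by (g : 'M[R]_m) (s : int) :=
  forall phi, Lat (phi *m g^T - s%:~R *: phi).

Lemma acts1E g : acts_trivially_on_disc A g <-> acts_by g 1.
Proof.
rewrite actsE; split=> h phi.
  by rewrite scale1r -opprB; apply: LatN.
by have := LatN (h phi); rewrite scale1r opprB.
Qed.

Lemma acts_comp g h s t : acts_by g s -> acts_by h t ->
  (forall x, Lat x -> Lat (x *m h^T)) -> acts_by (h *m g) (s * t).
Proof.
move=> hg hh hp phi.
have -> : phi *m (h *m g)^T - (s * t)%:~R *: phi =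
  (phi *m g^T - s%:~R *: phi) *m h^T + s%:~R *: (phi *m h^T - t%:~R *: phi).
  rewrite trmx_mul mulmxA mulmxBl -scalemxAl scalerBr scalerA intrM.
  by rewrite addrA subrK.
by apply: LatD; [apply: hp | apply: LatZ].
Qed.

Variables (N : nat) (phi0 : 'rV[R]_m).
Hypothesis hgen : forall phi, exists k : nat, Lat (phi - phi0 *+ k).
Hypothesis hN : Lat (phi0 *+ N).
Hypothesis hmin : forall k : nat, (0 < k < N)%N -> ~ Lat (phi0 *+ k).
Hypothesis N_gt0 : (0 < N)%N.

Lemma multN z : (N%:Z %| z)%Z -> Lat (z%:~R *: phi0).
Proof.
move=> /dvdzP [q ->]; rewrite intrM -scalerA.
apply: LatZ; by rewrite scaler_int -pmulrn.
Qed.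

Lemma ord_int z : Lat (z%:~R *: phi0) -> (N%:Z %| z)%Z.
Proof.
move=> hz.
have Np : (0 < N%:Z) by rewrite ltz_nat.
have [r er] : exists r : nat, (z %% N%:Z)%Z = r%:Z.
  exists `|(z %% N%:Z)%Z|%N; rewrite gez0_abs // modz_ge0 // gt_eqF //.
have hr : Lat (phi0 *+ r).
  have e : z = (z %/ N%:Z)%Z * N%:Z + r%:Z by rewrite -er -divz_eq.
  have := LatB hz (multN (dvdz_mull (z %/ N%:Z)%Z (dvdzz N%:Z))).
  rewrite -scalerBl -intrB {1}e addrAC subrr add0r.
  by rewrite scaler_int -pmulrn.
have rN : (r < N)%N by rewrite -ltz_nat -er ltz_pmod.
case: r er hr rN => [|r] er hr rN; first by apply/dvdz_mod0P.
by case: (hmin (k := r.+1)) => //; rewrite rN.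
Qed.

Lemma acts_uniq g s t : acts_by g s -> acts_by g t -> (N%:Z %| s - t)%Z.
Proof.
move=> hs ht; apply: ord_int.
have := LatB (ht phi0) (hs phi0).
suff -> : phi0 *m g^T - t%:~R *: phi0 - (phi0 *m g^T - s%:~R *: phi0) = (s - t)%:~R *: phi0 by [].
apply/rowP => j; rewrite !mxE intrB; ring.
Qed.

Lemma acts_mod g s t : acts_by g s -> (N%:Z %| s - t)%Z -> acts_by g t.
Proof.
move=> hs hd phi; have [k hk] := hgen phi.
have -> : phi *m g^T - t%:~R *: phi = (phi *m g^T - s%:~R *: phi)
   + ((s - t)%:~R *: (phi - phi0 *+ k) + ((s - t) * k%:Z)%:~R *: phi0).
  apply/rowP => j; rewrite !mxE !mulmxnE !intrM !intrB; ring.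
apply: LatD; first exact: hs.
apply: LatD; first exact: LatZ.
by apply: multN; apply: dvdz_mulr.
Qed.

Lemma acts_exists g : (forall x, Lat x -> Lat (x *m g^T)) -> exists u : int, acts_by g u.
Proof.
move=> hp; have [u hu] := hgen (phi0 *m g^T).
exists u%:Z => phi; have [j hj] := hgen phi.
have -> : phi *m g^T - u%:Z%:~R *: phi =
   ((phi - phi0 *+ j) *m g^T - u%:Z%:~R *: (phi - phi0 *+ j))
   + j%:R *: (phi0 *m g^T - phi0 *+ u).
  rewrite mulmxBl -!scaler_nat -scalemxAl.
  set X := phi *m g^T; set Y := phi0 *m g^T.
  apply/rowP => i; rewrite !mxE /=; ring.
apply: LatD; last exact: LatZ.
by apply: LatB; [apply: hp | apply: LatZ].
Qed.

End Act.


Section Disc.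
Variables (R : comNzRingType) (m : nat) (A : 'M[R]_m).
Local Notation Lat := (Lat A).
Local Notation B := (Bm A).
Local Notation bpair := (@bpair R m).

Lemma disc_form (N : nat) (phi0 w0 : 'rV[R]_m) g g' (u : int) :
  (forall x : R, N%:R * x = 0 -> x = 0) ->
  N%:R *: phi0 = w0 *m B ->
  g *m B *m g^T = B -> g' *m g = 1%:M -> acts_by A g u ->
  exists y, (u * u - 1)%:~R * bpair phi0 w0 = N%:R * y.
Proof.
move=> htf hw0 hg hg'g hu.
have [v1 hv1] := hu phi0.
have e1 : phi0 *m g^T = u%:~R *: phi0 + v1 *m B by rewrite -hv1 addrC subrK.
have hBg : B *m g^T = g' *m B by rewrite -{2}hg !mulmxA hg'g mul1mx.
pose z := w0 *m g' - u%:~R *: w0 - N%:R *: v1.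
have hz : z *m B = 0.
  rewrite /z !mulmxBl -!scalemxAl -mulmxA -hBg mulmxA -hw0 -scalemxAl e1.
  set X := v1 *m B.
  apply/rowP => i; rewrite !mxE; ring.
have hpz : bpair phi0 z = 0.
  apply: htf; rewrite -pairZl hw0 pairM BmT hz pair0r //.
have hc : bpair (phi0 *m g^T) (w0 *m g') = bpair phi0 w0.
  by rewrite pairM trmxK -mulmxA hg'g mulmx1.
have ew : w0 *m g' = u%:~R *: w0 + N%:R *: v1 + z.
  rewrite /z; set Y := w0 *m g'; apply/rowP => i; rewrite !mxE; ring.
clearbody z.
rewrite e1 ew !pairDl !pairDr !pairZl !pairZr hpz in hc.
rewrite [bpair (v1 *m B) w0]pairM BmT -hw0 pairZr [bpair (v1 *m B) z]pairM BmT hz pair0r in hc.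
exists (- (u%:~R * bpair phi0 v1 + u%:~R * bpair v1 phi0 + bpair (v1 *m B) v1)).
apply/eqP; rewrite -subr_eq0; apply/eqP.
transitivity (u%:~R * (u%:~R * bpair phi0 w0) + u%:~R * (N%:R * bpair phi0 v1) +
    u%:~R * 0 +
    (u%:~R * (N%:R * bpair v1 phi0) + N%:R * bpair (v1 *m B) v1 + 0) - bpair phi0 w0).
  rewrite intrB intrM mulr1z; ring.
by rewrite hc subrr.
Qed.

Lemma det_rank1 (U : 'M[R]_(m, 1)) (W : 'M[R]_(1, m)) :
  \det (1%:M - U *m W) = 1 - (W *m U) 0 0.
Proof.
have E1 : block_mx 1%:M U W 1%:M = block_mx (1%:M - U *m W) U 0 1%:M *m block_mx 1%:M 0 W 1%:M.
  by rewrite mulmx_block ?mulmx1 ?mul1mx ?mulmx0 ?mul0mx ?addr0 ?add0r subrK.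
have E2 : block_mx 1%:M U W 1%:M = block_mx 1%:M 0 W (1%:M - W *m U) *m block_mx 1%:M U 0 1%:M.
  by rewrite mulmx_block ?mulmx1 ?mul1mx ?mulmx0 ?mul0mx ?addr0 ?add0r addrC subrK.
have := congr1 determinant (etrans (esym E1) E2).
rewrite !det_mulmx det_ublock det_lblock det_ublock det_lblock !det1 !mulr1 mul1r.
by rewrite det_mx11 !mxE eqxx.
Qed.


Section Refl.
Variables (v : 'rV[R]_m) (c : R).
Hypothesis hc : c * qform A v = 1.
Definition Uv : 'M[R]_(m, 1) := B *m v^T.
Definition Wv : 'M[R]_(1, m) := c *: v.
Definition sigma : 'M[R]_m := 1%:M - Uv *m Wv.

Lemma det_sigma : \det sigma = -1.
Proof.
rewrite det_rank1 /Wv /Uv -scalemxAl mxE mulmxA -/(bpair (v *m B) v) pairB2.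
have -> : c * (qform A v + qform A v) = 1 + 1 by rewrite mulrDr hc.
by rewrite opprD addrA subrr add0r.
Qed.

Lemma UvT : Uv^T = v *m B.
Proof. by rewrite /Uv trmx_mul trmxK BmT. Qed.

Lemma sigma_B : sigma *m B *m sigma^T = B.
Proof.
have f1 : B *m Wv^T = c *: Uv by rewrite /Wv linearZ /= -scalemxAr.
have f2 : Wv *m B = c *: Uv^T by rewrite /Wv UvT -scalemxAl.
have f3 : Wv *m B *m Wv^T = (c * (1 + 1))%:M.
  rewrite [LHS]mx11_scalar f2 -scalemxAl mxE /Wv linearZ /= -scalemxAr mxE UvT.
  rewrite -/(bpair (v *m B) v) pairB2.
  by congr (_%:M); rewrite mulrA [c * c]mulrC -mulrA mulrDr hc mulrDr mulr1.
rewrite /sigma linearB /= trmx1 trmx_mul.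
rewrite mulmxBl mul1mx !mulmxBr !mulmx1 mulmxBl.
have f4 : Uv *m Wv *m B *m (Wv^T *m Uv^T) = Uv *m (Wv *m B *m Wv^T) *m Uv^T by rewrite !mulmxA.
have f5 : B *m (Wv^T *m Uv^T) = c *: (Uv *m Uv^T) by rewrite mulmxA f1 -scalemxAl.
have f6 : Uv *m Wv *m B = c *: (Uv *m Uv^T) by rewrite -mulmxA f2 -scalemxAr.
rewrite f4 f3 mul_mx_scalar -scalemxAl f5 f6.
set X := Uv *m Uv^T.
apply/matrixP => i j; rewrite !mxE; ring.
Qed.

Lemma sigma_acts (phi : 'rV[R]_m) : phi - phi *m sigma^T = (phi *m Wv^T *m v) *m B.
Proof.
rewrite /sigma linearB /= trmx1 trmx_mul UvT mulmxBr mulmx1 opprB addrC subrK.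
by rewrite !mulmxA.
Qed.
End Refl.
End Disc.


Section Zp.
Variable p : nat.
Hypothesis pr : prime p.
Hypothesis p2 : p != 2%N.
Local Notation R := ('Z_p[p]).

Lemma p_gt2 : (2 < p)%N.
Proof. by have := prime_gt1 pr; rewrite leq_eqVlt eq_sym (negbTE p2). Qed.

Lemma lvl1_0 : (0 : R) 1%N = 0. Proof. by []. Qed.
Lemma lvl1_add0 (x y : R) : x 1%N = 0 -> y 1%N = 0 -> (x + y) 1%N = 0.
Proof. by move=> hx hy; rewrite addE hx hy mod0z. Qed.
Lemma lvl1_opp0 (x : R) : x 1%N = 0 -> (- x) 1%N = 0.
Proof. by move=> hx; rewrite oppE hx oppr0 mod0z. Qed.
Lemma lvl1_mul0l (x y : R) : x 1%N = 0 -> (x * y) 1%N = 0.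
Proof. by move=> hx; rewrite mulE hx mul0r mod0z. Qed.
Lemma lvl1_mul0r (x y : R) : y 1%N = 0 -> (x * y) 1%N = 0.
Proof. by move=> hx; rewrite mulE hx mulr0 mod0z. Qed.

Lemma two_cancel (a b : R) : a + a = b + b -> a = b.
Proof.
have h2 : (2%:R : R) 1%N != 0.
  rewrite natE (pmodE pr) // expr1 modz_small; first by [].
  by rewrite ltz_nat p_gt2.
have [y hy] := punit pr h2.
move=> e; rewrite -[a]mul1r -[b]mul1r -hy [2%:R * y]mulrC -!mulrA.
by rewrite !mulr_natl !mulr2n e.
Qed.

Lemma zdiv (z : int) (c y : R) k : c 1%N != 0 ->
  z%:~R * c = (p ^ k)%:R * y -> ((p ^ k)%:Z %| z)%Z.
Proof.
move=> hc e.
have : (z%:~R * c : R) k = ((p ^ k)%:R * y : R) k by rewrite e.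
rewrite !mulE intE natE modzMml.
have -> : (p ^ k)%:Z = pmod p k by rewrite (pmodE pr) -natz natrX natz.
rewrite modzz mul0r mod0z => /dvdz_mod0P.
clear e; case: k => [|k]; first by rewrite /pmod expr0 dvd1z.
rewrite Gauss_dvdzl // (pmodE pr) // coprimez_sym.
by apply: coprimezXr; apply: coprime_lvl.
Qed.


Lemma lvl_sub_mul (x y : R) (k : nat) :
  (x - y *+ k) 1%N = ((x 1%N - y 1%N * k%:Z) %% p%:Z)%Z.
Proof.
rewrite -mulr_natr addE oppE mulE natE modzMmr modzNm modzDmr.
by rewrite (pmodE pr) expr1.
Qed.

Section Cyc.
Variables (m : nat) (A : 'M[R]_m) (nu : nat) (phi0 : 'rV[R]_m).
Local Notation B := (Bm A).
Local Notation N := (p ^ nu.+1)%N.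
Hypothesis hgen : forall phi, exists k : nat, Lat A (phi - phi0 *+ k).
Hypothesis hmin : forall k : nat, (0 < k < N)%N -> ~ Lat A (phi0 *+ k).

Lemma c_unit (w0 : 'rV[R]_m) : N%:R *: phi0 = w0 *m B -> (bpair phi0 w0) 1%N != 0.
Proof.
move=> hw0; apply/negP => /eqP hc0.
have hN1 : (N%:R : R) 1%N = 0.
  by rewrite natE (pmodE pr) expr1 expnS PoszM modzMr.
have hw : forall i, (w0 0 i) 1%N = 0.
  move=> i; have [k [l hl]] := hgen (delta_mx 0 i).
  have e : delta_mx 0 i = phi0 *+ k + l *m B by rewrite -hl addrC subrK.
  have : bpair w0 (delta_mx 0 i) = k%:R * bpair w0 phi0 + N%:R * bpair l phi0.
    by rewrite e pairDr -scaler_nat pairZr [bpair w0 (l *m B)]pairC pairM BmT -hw0 pairZr.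
  rewrite pair_delta => ->.
  by apply: lvl1_add0; [apply: lvl1_mul0r; rewrite pairC | apply: lvl1_mul0l].
have hy0 : forall i, exists y : R, w0 0 i = p%:R * y := fun i => zp_pdiv pr (hw i).
have [y hy] := fin_all_exists hy0.
pose Y := \row_i y i.
have hwY : w0 = p%:R *: Y by apply/rowP => i; rewrite !mxE hy.
have h0 : p%:R *: ((p ^ nu)%:R *: phi0 - Y *m B) = 0.
  by rewrite scalerBr scalerA -natrM -expnS hw0 hwY -scalemxAl subrr.
have hL : (p ^ nu)%:R *: phi0 = Y *m B.
  apply/eqP; rewrite -subr_eq0; apply/eqP; apply/rowP => i.
  move/(congr1 (fun M : 'rV[R]_m => M 0 i)): h0; rewrite !mxE => /(ptf pr).
  by [].
apply: (hmin (k := (p ^ nu)%N)); last by rewrite -scaler_nat hL; exists Y.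
by rewrite expn_gt0 prime_gt0 //= ltn_exp2l // prime_gt1.
Qed.

Lemma entry_cong (i j : 'I_m) (k : nat) (l : 'rV[R]_m) :
  delta_mx 0 i - phi0 *+ k = l *m B ->
  (forall (v : 'rV[R]_m) j, ((v *m B) 0 j) 1%N = 0) ->
  (p%:Z %| (j == i)%:Z - (phi0 ord0 j) 1%N * k%:Z)%Z.
Proof.
move=> hl hvB; apply/dvdz_mod0P.
have := hvB l j; rewrite -hl !(mxE, mulmxnE) lvl_sub_mul eqxx /= natE (pmodE pr) expr1.
by rewrite modzDml.
Qed.

Lemma unit_vec : (1 < m)%N -> exists v, (qform A v) 1%N != 0.
Proof.
move=> hm.
have [H|H] := boolP [exists i : 'I_m, exists j : 'I_m, ((qform A (delta_mx 0 i + delta_mx 0 j)) 1%N != 0) || ((qform A (delta_mx 0 i)) 1%N != 0)].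
  move/existsP: H => [i /existsP [j /orP [h|h]]]; by eexists; exact: h.
have hq : forall i j, (qform A (delta_mx 0 i + delta_mx 0 j)) 1%N = 0 /\ (qform A (delta_mx 0 i)) 1%N = 0.
  move=> i j; move/negP: H => H.
  split; apply/eqP; apply/negPn/negP => hn; apply: H; apply/existsP; exists i; apply/existsP; exists j;
  by rewrite hn ?orbT.
have hB : forall i j, (B i j) 1%N = 0.
  move=> i j; rewrite -pair_delta_l -bformE /bform.
  apply: lvl1_add0; [apply: lvl1_add0; [exact: (hq i j).1 | apply: lvl1_opp0; exact: (hq i j).2] | apply: lvl1_opp0; exact: (hq j j).2].
have hvB : forall (v : 'rV[R]_m) j, ((v *m B) 0 j) 1%N = 0.
  move=> v j; rewrite mxE; elim/big_rec: _ => // k x _ hx.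
  by apply: lvl1_add0 => //; apply: lvl1_mul0r.
pose i0 : 'I_m := Ordinal (ltn_trans (ltnSn 0) hm).
pose i1 : 'I_m := Ordinal hm.
have [k0 [l0 h0]] := hgen (delta_mx 0 i0).
have [k1 [l1 h1]] := hgen (delta_mx 0 i1).
have d00 := entry_cong i0 h0 hvB; have d01 := entry_cong i1 h0 hvB.
have d10 := entry_cong i0 h1 hvB; have d11 := entry_cong i1 h1 hvB.
rewrite eqxx in d00 d11.
have ne : (i0 == i1) = false by [].
rewrite ne eq_sym ne /= !sub0r in d01 d10.
set a0 := (phi0 0 i0) 1%N in d00 d10; set a1 := (phi0 0 i1) 1%N in d01 d11.
have H1 : (p%:Z %| (1 - a1 * k1%:Z) + (a1 * k1%:Z) * (1 - a0 * k0%:Z)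
     + - (a1 * k0%:Z) * - (a0 * k1%:Z))%Z.
  apply: rpredD; [apply: rpredD; [exact: d11 | exact: dvdz_mull d00] | exact: dvdz_mull d10].
have e : (1 - a1 * k1%:Z) + (a1 * k1%:Z) * (1 - a0 * k0%:Z)
     + - (a1 * k0%:Z) * - (a0 * k1%:Z) = 1 by ring.
move: H1; rewrite e.
rewrite dvdz1 => /eqP hp; have hpg := prime_gt1 pr; rewrite absz_nat in hp; by rewrite hp in hpg.
Qed.
End Cyc.

End Zp.


Lemma natXz (p k : nat) : (p ^ k)%:Z = (p%:Z) ^+ k.
Proof. by rewrite -natz natrX natz. Qed.

Lemma sq1 (p k : nat) (u : int) : prime p -> p != 2%N ->
  ((p ^ k)%:Z %| u * u - 1)%Z -> ((p ^ k)%:Z %| u - 1)%Z \/ ((p ^ k)%:Z %| u + 1)%Z.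
Proof.
move=> pr p2 H.
have e : u * u - 1 = (u - 1) * (u + 1) by ring.
rewrite e in H.
case: (boolP (coprimez p%:Z (u - 1))) => c1.
  right; move: H; rewrite Gauss_dvdzr // natXz; exact: coprimezXl.
case: (boolP (coprimez p%:Z (u + 1))) => c2.
  left; move: H; rewrite Gauss_dvdzl // natXz; exact: coprimezXl.
exfalso.
have d1 : (p%:Z %| u - 1)%Z by move: c1; rewrite coprimezE absz_nat prime_coprime // dvdzE absz_nat negbK.
have d2 : (p%:Z %| u + 1)%Z by move: c2; rewrite coprimezE absz_nat prime_coprime // dvdzE absz_nat negbK.
have : (p%:Z %| (u + 1) - (u - 1))%Z by rewrite rpredB.
have -> : (u + 1) - (u - 1) = 2 by ring.
rewrite dvdzE absz_nat => /(dvdn_leq (isT : (0 < 2)%N)) hp.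
have := prime_gt1 pr => hp1.
by move: p2; have -> : p = 2%N by apply/eqP; rewrite eqn_leq hp hp1.
Qed.

Lemma adjK (R : comNzRingType) m (g : 'M[R]_m) : \det g = 1 -> \adj g *m g = 1%:M /\ g *m \adj g = 1%:M.
Proof. by move=> h; rewrite mul_adj_mx mul_mx_adj h. Qed.

Theorem mainTheorem14 (p : nat) (m nu : nat) (A : 'M['Z_p[p]]_m) :
  prime p -> p != 2%N ->
  qf_nondegenerate A ->
  disc_cyclic_of_order A (p ^ nu) ->
  if (nu == 0%N) || (m == 1%N)
  then quotient_trivial (SO_lat A) (SO'_lat A)
  else quotient_is_Z2 (SO_lat A) (SO'_lat A).
Proof.
move=> pr p2 _ [phi0 [hgen0 hN0 hmin0]].
have hgen : forall phi, exists k : nat, Lat A (phi - phi0 *+ k).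
  by move=> phi; have [k hk] := hgen0 phi; exists k; apply/in_latticeE.
have hN : Lat A (phi0 *+ p ^ nu) by apply/in_latticeE.
have hmin : forall k : nat, (0 < k < p ^ nu)%N -> ~ Lat A (phi0 *+ k).
  by move=> k hk /in_latticeE; apply: hmin0.
case: ifP => hcase.
  case/orP: hcase => [/eqP hnu | /eqP hm].
    have allL : forall phi, Lat A phi.
      move=> phi; have [k hk] := hgen phi.
      have -> : phi = (phi - phi0 *+ k) + k%:R *: (phi0 *+ 1).
        by rewrite mulr1n scaler_nat subrK.
      by apply: LatD => //; apply: LatZ; move: hN; rewrite hnu expn0.
    move=> g [hq hdet]; split => //; apply/actsE => phi; exact: allL.
  subst m => g [hq hdet]; split => //; apply/actsE => phi.
  have -> : g = 1%:M by rewrite [g]mx11_scalar -det_mx11 hdet.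
  by rewrite trmx1 mulmx1 subrr; apply: Lat0.
move/negbT: hcase; rewrite negb_or => /andP [hnu hm].
case: nu hnu hgen hN hmin hgen0 hN0 hmin0 => [//|nu] _ hgen hN hmin _ _ _.
set N := (p ^ nu.+1)%N in hN hmin.
have N_gt0 : (0 < N)%N by rewrite expn_gt0 prime_gt0.
have N_gt2 : (2 < N)%N.
  have hp3 := p_gt2 pr p2.
  have hpN : (p <= N)%N by rewrite /N expnS leq_pmulr // expn_gt0 prime_gt0.
  exact: leq_trans hp3 hpN.
have htf : forall x : 'Z_p[p], N%:R * x = 0 -> x = 0 by move=> x; apply: ntf.
have [w0 hw0] : exists w0, N%:R *: phi0 = w0 *m Bm A.
  by move: hN => [w0 hw]; exists w0; rewrite scaler_nat.
have hcu := c_unit pr hgen hmin hw0.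
have pres : forall g, SO_lat A g -> forall x, Lat A x -> Lat A (x *m g^T).
  move=> g [hq hdet]; apply: (Lat_pres (g' := \adj g)); first by case: (adjK hdet).
  exact: SO_B.
have key : forall g u, SO_lat A g -> acts_by A g u ->
    (N%:Z %| u - 1)%Z \/ (N%:Z %| u - (-1))%Z.
  move=> g u [hq hdet] hu.
  have [y hy] := disc_form htf hw0 (SO_B hq) (adjK hdet).1 hu.
  have := zdiv pr hcu hy; rewrite -/N => /(sq1 pr p2).
  by rewrite opprK.
have not2 : forall g, acts_by A g 1 -> acts_by A g (-1) -> False.
  move=> g h1 h2; have := acts_uniq hN hmin N_gt0 h1 h2.
  have -> : (1 - (-1) : int) = 2 by [].
  by rewrite dvdzE absz_nat => /(dvdn_leq (isT : (0 < 2)%N)); rewrite leqNgt N_gt2.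
have [g0 [hg0 ha0]] : exists g0, SO_lat A g0 /\ acts_by A g0 (-1).
  case: (boolP (odd m)) => hodd.
    have m1 : (1 < m)%N.
      by rewrite ltn_neqAle eq_sym hm odd_gt0.
    have [v hv] := unit_vec pr hgen m1.
    have [c hc] := punit pr hv.
    rewrite mulrC in hc.
    exists (- sigma A v c); split; first split.
    - apply: B_SO; first exact: two_cancel pr p2.
      by rewrite linearN /= !mulNmx mulmxN opprK (sigma_B hc).
    - rewrite -scaleN1r detZ det_sigma // -signr_odd hodd expr1.
      by rewrite mulrNN mulr1.
    - move=> phi; rewrite linearN /= mulmxN scaler_int mulrN1z opprK addrC.
      rewrite sigma_acts; exact: LatM.
  exists (- 1%:M); split; first split.
  - by move=> v; rewrite mulmxN mulmx1 !qformE mulNmx pairNl pairNr opprK.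
  - rewrite -scaleN1r detZ det1 mulr1 -signr_odd (negbTE hodd) expr0 //.
  - move=> phi; rewrite linearN /= trmx1 mulmxN mulmx1 scaler_int mulrN1z opprK addNr.
    exact: Lat0.
exists g0; split => //.
  by move=> [_ /acts1E h1]; apply: (not2 g0).
move=> g hg.
have [u hu] := acts_exists hgen (pres g hg).
case: (key g u hg hu) => hk.
  by left; split => //; apply/acts1E; apply: (acts_mod hgen hN hu).
right.
have hgm : acts_by A g (-1) by apply: (acts_mod hgen hN hu).
case: hg0 => [hq0 hdet0].
have [e1 e2] := adjK hdet0.
have hdeth : \det (\adj g0) = 1.
  by have := congr1 determinant e2; rewrite det_mulmx hdet0 mul1r det1.
have hh : SO_lat A (\adj g0).
  split => // v; rewrite -[in LHS](hq0 (v *m \adj g0)) -mulmxA e1 mulmx1.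
  by [].
have [t ht] := acts_exists hgen (pres _ hh).
have hcomp := acts_comp ht ha0 (pres _ (conj hq0 hdet0)).
rewrite e2 in hcomp.
have h1 : acts_by A 1%:M 1.
  by move=> phi; rewrite trmx1 mulmx1 scale1r subrr; exact: Lat0.
have := acts_uniq hN hmin N_gt0 hcomp h1.
have -> : t * -1 - 1 = - (t - -1) by ring.
rewrite rpredN => htd.
have hhm := acts_mod hgen hN ht htd.
exists (\adj g0 *m g); split.
  split.
    case: hg => hq hdet; split; last by rewrite det_mulmx hdeth hdet mul1r.
    by move=> v; rewrite mulmxA hq; case: hh => ->.
  apply/acts1E.
  have := acts_comp hgm hhm (pres _ hh).
  by rewrite mulrNN mulr1.
by rewrite mulmxA e2 mul1mx.
Qed.
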